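(* Let $U=U_1\times\cdots\times U_m\subset\mathbb{R}^m_+$ (each $U_i\subseteq\mathbb{R}$) be a convex set, $C\subseteq\mathbb{R}^m$, $\overline{U}=U\cap C$. Let $\rho_{\rm ro}=\rho(U^\downarrow,\Pi(\overline{U}^\downarrow))$, $\gamma_{\rm ro}=\gamma(U^\downarrow,\Pi(\overline{U}^\downarrow))$, $\rho_{\rm aro}=\rho(U^\downarrow,\overline{U}^\downarrow)$, $\gamma_{\rm aro}=\gamma(U^\downarrow,\overline{U}^\downarrow)$. Then $\rho_{\rm ro}\ge\rho_{\rm aro}$ and $\gamma_{\rm ro}=\gamma_{\rm aro}$.
   Context: For $S\subseteq\mathbb{R}^m_+$, $S^\downarrow=\{t\in\mathbb{R}^m_+:\exists s\in S,\ t\le s\text{ componentwise}\}$. $\Pi_i(S)$ is the projection of $S$ onto coordinate $i$ and $\Pi(S)=\Pi_1(S)\times\cdots\times\Pi_m(S)$. For $r\ge0$, $rS=\{rx:x\in S\}$; $\rho(S_1,S_2)=\max\{\rho\ge0:\rho S_1\subseteq S_2\}$, $\gamma(S_1,S_2)=\min\{\gamma\ge0:S_2\subseteq\gamma S_1\}$. *)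

(* Defs.v *)
From mathcomp Require Import all_boot all_order all_algebra.
From mathcomp Require Import all_classical all_reals.
From mathcomp Require Import ereal.
Set Implicit Arguments. Unset Strict Implicit. Unset Printing Implicit Defensive.
Import Order.TTheory GRing.Theory Num.Theory.
Local Open Scope classical_set_scope.
Local Open Scope ring_scope.

Section Defs.
Variables (R : realType) (m : nat).
Notation V := ('I_m -> R).

Definition nonneg_orth : set V := [set x | forall i, 0 <= x i].

Definition prodset (Ui : 'I_m -> set R) : set V := [set x | forall i, Ui i (x i)].

Definition convex_set (S : set V) : Prop :=
  forall x y, S x -> S y -> forall t : R, 0 <= t -> t <= 1 ->
    S (fun i => t * x i + (1 - t) * y i).

Definition downcl (S : set V) : set V :=
  [set t | (forall i, 0 <= t i) /\ exists2 s, S s & forall i, t i <= s i].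

Definition proj (i : 'I_m) (S : set V) : set R := [set x i | x in S].
Definition Pi (S : set V) : set V := [set x | forall i, proj i S (x i)].

Definition scale (r : R) (S : set V) : set V := [set (fun i => r * x i) | x in S].

Definition rho (S1 S2 : set V) : \bar R :=
  ereal_sup [set r%:E | r in [set r : R | 0 <= r /\ scale r S1 `<=` S2]].

Definition gamma (S1 S2 : set V) : \bar R :=
  ereal_inf [set g%:E | g in [set g : R | 0 <= g /\ S2 `<=` scale g S1]].
End Defs.

(* Main.v *)
Require Import Defs.
From mathcomp Require Import all_boot all_order all_algebra.
From mathcomp Require Import all_classical all_reals.
From mathcomp Require Import ereal.
Import Order.TTheory GRing.Theory Num.Theory.
Local Open Scope classical_set_scope.
Local Open Scope ring_scope.

Theorem corollary6 (R : realType) (m : nat) (Ui : 'I_m -> set R)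
    (C : set ('I_m -> R)) :
  prodset Ui `<=` @nonneg_orth R m ->
  convex_set (prodset Ui) ->
  let U := prodset Ui in
  let Ubar := U `&` C in
  (rho (downcl U) (Pi (downcl Ubar)) >= rho (downcl U) (downcl Ubar))%E /\
  gamma (downcl U) (Pi (downcl Ubar)) = gamma (downcl U) (downcl Ubar).
Proof.
move=> hU _ U Ubar.
have AP : downcl Ubar `<=` Pi (downcl Ubar).
  by move=> t At i; exists t.
split.
  apply: ereal_sup_le => _ [r [r0 hr] <-]; exists r => //; split => //.
  exact: subset_trans hr AP.
rewrite /gamma; congr ereal_inf; congr image.
apply/funext => g; apply/propext; split => -[g0 hg]; split => //.
  exact: subset_trans AP hg.
move=> x Px.
have H : forall i, exists s, U s /\ 0 <= x i /\
    exists d, [/\ 0 <= d i, d i <= s i & x i = g * d i].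
  move=> i; have [a Aa axi] := Px i.
  have [a0 _] := Aa.
  have [d [d0 [s Us ds]] da] := hg a Aa.
  exists s; split => //; split; first by rewrite -axi.
  by exists d; split => //; rewrite -axi -da.
have [f Hf] := choice H.
pose u := fun i => f i i.
have Uu : U u by move=> i; have [Ufi _] := Hf i; exact: Ufi.
have u0 : forall i, 0 <= u i by move=> i; exact: hU _ Uu i.
have [gz|gn0] := eqVneq g 0.
  exists u; first by split => //; exists u.
  apply/funext => i /=; have [_ [_ [d [_ _ ->]]]] := Hf i; by rewrite gz !mul0r.
have gp : 0 < g by rewrite lt_def gn0 g0.
exists (fun i => x i / g).
  split.
    by move=> i; have [_ [x0 _]] := Hf i; rewrite divr_ge0.
  exists u => // i; have [_ [_ [d [_ ds ->]]]] := Hf i.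
  by rewrite mulrC mulKf.
by apply/funext => i; rewrite mulrC divfK.
Qed.
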